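(* Let $M$ be a nonempty finite metric space with $m = \#M$ points, let $n \ge m$ be an integer and let $t>0$. Then $$d_{GH}(t\Delta_n, M) = d_{GH}\bigl(\mathcal{H}(t\Delta_n), \mathcal{H}(M)\bigr).$$
   Context: A simplex $t\Delta_n$ is the metric space with $n$ points, any two distinct ones at distance $t$. For a compact metric space $X$, $\mathcal{H}(X)$ is the set of all nonempty closed subsets of $X$ with the Hausdorff distance $|AB| = \max\{\sup_{a\in A}\inf_{b\in B}|ab|, \sup_{b\in B}\inf_{a\in A}|ab|\}$. $d_{GH}$ is the Gromov–Hausdorff distance (the infimum of $r$ such that there is a metric space $Z$ containing isometric copies $X',Y'$ of $X,Y$ with Hausdorff distance $|X'Y'|_Z\le r$). *)

(* Defs.v *)
From Stdlib Require Import Reals Lra Lia List ClassicalEpsilon.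
Open Scope R_scope.

Definition is_metric {X : Type} (d : X -> X -> R) : Prop :=
  (forall x y, 0 <= d x y) /\
  (forall x y, d x y = 0 <-> x = y) /\
  (forall x y, d x y = d y x) /\
  (forall x y z, d x z <= d x y + d y z).

Definition is_glb (S : R -> Prop) (r : R) : Prop :=
  (forall x, S x -> r <= x) /\ (forall y, (forall x, S x -> y <= x) -> y <= r).

(* Supremum / infimum of a set of reals (meaningful when it exists). *)
Definition Sup (S : R -> Prop) : R := epsilon (inhabits 0) (is_lub S).
Definition Inf (S : R -> Prop) : R := epsilon (inhabits 0) (is_glb S).

Definition hausdorff {X : Type} (d : X -> X -> R) (A B : X -> Prop) : R :=
  Rmax (Sup (fun s => exists a, A a /\ s = Inf (fun u => exists b, B b /\ u = d a b)))
       (Sup (fun s => exists b, B b /\ s = Inf (fun u => exists a, A a /\ u = d a b))).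

Definition isometric_embedding {X Z : Type} (dX : X -> X -> R) (dZ : Z -> Z -> R)
  (f : X -> Z) : Prop := forall x y, dZ (f x) (f y) = dX x y.

Definition image {X Z : Type} (f : X -> Z) : Z -> Prop := fun z => exists x, f x = z.

Definition dGH (X : Type) (dX : X -> X -> R) (Y : Type) (dY : Y -> Y -> R) : R :=
  Inf (fun r => exists (Z : Type) (dZ : Z -> Z -> R), is_metric dZ /\
         exists (f : X -> Z) (g : Y -> Z),
           isometric_embedding dX dZ f /\ isometric_embedding dY dZ g /\
           hausdorff dZ (image f) (image g) <= r).

Definition closed {X : Type} (d : X -> X -> R) (A : X -> Prop) : Prop :=
  forall x, (forall eps, 0 < eps -> exists a, A a /\ d x a < eps) -> A x.

Definition hyp (X : Type) (d : X -> X -> R) : Type :=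
  { A : X -> Prop | (exists x, A x) /\ closed d A }.

Definition hyp_dist {X : Type} (d : X -> X -> R) (A B : hyp X d) : R :=
  hausdorff d (proj1_sig A) (proj1_sig B).

Definition simplex (n : nat) : Type := { i : nat | (i < n)%nat }.

Definition simplex_dist (n : nat) (t : R) (i j : simplex n) : R :=
  if Nat.eq_dec (proj1_sig i) (proj1_sig j) then 0 else t.

(* Main.v *)
Require Import Defs.
From Stdlib Require Import Reals Lra Lia List ClassicalEpsilon FunctionalExtensionality PropExtensionality ProofIrrelevance.
Open Scope R_scope.

Lemma Sup_spec (S : R -> Prop) : (exists x, S x) -> (exists K, forall x, S x -> x <= K) -> is_lub S (Sup S).
Proof. intros Hne [K HK]. unfold Sup. apply epsilon_spec.
  destruct (completeness S) as [m Hm]; [exists K; exact HK | exact Hne |]. exists m; exact Hm. Qed.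

Lemma Inf_spec (S : R -> Prop) : (exists x, S x) -> (exists K, forall x, S x -> K <= x) -> is_glb S (Inf S).
Proof. intros [x Hx] [K HK]. unfold Inf. apply epsilon_spec.
 set (S' := fun y => S (-y)).
 destruct (completeness S') as [m [Hm1 Hm2]].
 - exists (-K). intros y Hy. unfold S' in Hy. specialize (HK _ Hy). lra.
 - exists (-x). unfold S'. rewrite Ropp_involutive. exact Hx.
 - exists (-m). split.
   + intros z Hz. assert (H: S' (-z)) by (unfold S'; rewrite Ropp_involutive; exact Hz). specialize (Hm1 _ H). lra.
   + intros y Hy. assert (H: is_upper_bound S' (-y)). { intros z Hz. specialize (Hy _ Hz). lra. } specialize (Hm2 _ H). lra.
Qed.

Lemma glb_unique S a b : is_glb S a -> is_glb S b -> a = b.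
Proof. intros [A1 A2] [B1 B2]. apply Rle_antisym; [apply B2; exact A1 | apply A2; exact B1]. Qed.

Lemma Inf_eq S F : (forall r, S r -> F <= r) -> (forall r, F < r -> S r) -> Inf S = F.
Proof. intros H1 H2.
  assert (HF : is_glb S F).
  { split; [exact H1|]. intros y Hy. apply Rnot_lt_le. intro Hlt.
    assert (Hs := H2 ((F+y)/2) ltac:(lra)). specialize (Hy _ Hs). lra. }
  apply (glb_unique S); [| exact HF]. unfold Inf. apply epsilon_spec. exists F; exact HF. Qed.

Section Gen.
Context {T : Type} (P : T -> Prop) (g : T -> R).

Lemma Inf_le_approx r : (forall z, 0 <= g z) -> (exists z, P z) ->
  (forall eps, 0 < eps -> exists z, P z /\ g z < r + eps) ->
  Inf (fun u => exists z, P z /\ u = g z) <= r.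
Proof. intros Hnn [z0 Hz0] H.
  destruct (Inf_spec (fun u => exists z, P z /\ u = g z)) as [Hl _].
  - exists (g z0); eauto.
  - exists 0. intros u [z [_ ->]]; auto.
  - apply Rnot_lt_le; intro Hlt. destruct (H (Inf (fun u => exists z, P z /\ u = g z) - r)) as [z [Pz Hz]]; [lra|].
    assert (Hle := Hl (g z) (ex_intro _ z (conj Pz eq_refl))). lra.
Qed.

Lemma Inf_ge K : (exists z, P z) -> (forall z, P z -> K <= g z) -> K <= Inf (fun u => exists z, P z /\ u = g z).
Proof. intros [z0 Hz0] H.
  destruct (Inf_spec (fun u => exists z, P z /\ u = g z)) as [_ Hg].
  - exists (g z0); eauto.
  - exists K. intros u [z [Pz ->]]; auto.
  - apply Hg. intros u [z [Pz ->]]; auto. Qed.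

Lemma Inf_le_pt z : (forall z, 0 <= g z) -> P z -> Inf (fun u => exists z, P z /\ u = g z) <= g z.
Proof. intros Hnn Hz.
  destruct (Inf_spec (fun u => exists z, P z /\ u = g z)) as [Hl _].
  - exists (g z); eauto.
  - exists 0. intros u [z' [_ ->]]; auto.
  - apply Hl. eauto. Qed.

Lemma Inf_approx eps : (exists z, P z) -> (forall z, 0 <= g z) -> 0 < eps ->
  exists z, P z /\ g z < Inf (fun u => exists z, P z /\ u = g z) + eps.
Proof. intros [z0 Hz0] Hnn He.
  destruct (Inf_spec (fun u => exists z, P z /\ u = g z)) as [_ Hg].
  - exists (g z0); eauto.
  - exists 0. intros u [z [_ ->]]; auto.
  - apply Classical_Prop.NNPP. intro Hn.
    assert (Hlb : forall u, (exists z, P z /\ u = g z) -> Inf (fun u => exists z, P z /\ u = g z) + eps <= u).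
    { intros u [z [Pz ->]]. apply Rnot_lt_le. intro Hl. apply Hn. eauto. }
    specialize (Hg _ Hlb). lra. Qed.

Lemma Sup_le r : (exists z, P z) -> (forall z, P z -> g z <= r) -> Sup (fun u => exists z, P z /\ u = g z) <= r.
Proof. intros [z0 Hz0] H.
  destruct (Sup_spec (fun u => exists z, P z /\ u = g z)) as [_ Hg].
  - exists (g z0); eauto.
  - exists r. intros u [z [Pz ->]]; auto.
  - apply Hg. intros u [z [Pz ->]]; auto. Qed.

Lemma Sup_ge_pt z K : P z -> (forall z, P z -> g z <= K) -> g z <= Sup (fun u => exists z, P z /\ u = g z).
Proof. intros Hz H.
  destruct (Sup_spec (fun u => exists z, P z /\ u = g z)) as [Hl _].
  - exists (g z); eauto.
  - exists K. intros u [z' [Pz ->]]; auto.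
  - apply Hl. eauto. Qed.
End Gen.

Section Haus.
Context {Z : Type} (d : Z -> Z -> R) (Hnn : forall x y, 0 <= d x y).

Lemma haus_le (A B : Z -> Prop) r : (exists a, A a) -> (exists b, B b) ->
 (forall a, A a -> forall eps, 0<eps -> exists b, B b /\ d a b < r + eps) ->
 (forall b, B b -> forall eps, 0<eps -> exists a, A a /\ d a b < r + eps) ->
 hausdorff d A B <= r.
Proof. intros HA HB H1 H2. unfold hausdorff. apply Rmax_lub.
 - apply (Sup_le A (fun a => Inf (fun u => exists b, B b /\ u = d a b))); auto.
   intros a Ha. apply (Inf_le_approx B (d a)); auto.
 - apply (Sup_le B (fun b => Inf (fun u => exists a, A a /\ u = d a b))); auto.
   intros b Hb. apply (Inf_le_approx A (fun a => d a b)); auto.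
Qed.

Lemma haus_ge1 (A B : Z -> Prop) a r K : A a -> (exists b, B b) -> (forall a b, A a -> B b -> d a b <= K) ->
  (forall b, B b -> r <= d a b) -> r <= hausdorff d A B.
Proof. intros Ha [b0 Hb0] HK H. unfold hausdorff. eapply Rle_trans; [|apply Rmax_l].
 eapply Rle_trans; [|apply (Sup_ge_pt A (fun a => Inf (fun u => exists b, B b /\ u = d a b)) a K); auto].
 - apply (Inf_ge B (d a)); eauto.
 - intros a' Ha'. eapply Rle_trans; [apply (Inf_le_pt B (d a') b0); auto|]. auto.
Qed.

Lemma haus_ge2 (A B : Z -> Prop) b r K : B b -> (exists a, A a) -> (forall a b, A a -> B b -> d a b <= K) ->
  (forall a, A a -> r <= d a b) -> r <= hausdorff d A B.
Proof. intros Hb [a0 Ha0] HK H. unfold hausdorff. eapply Rle_trans; [|apply Rmax_r].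
 eapply Rle_trans; [|apply (Sup_ge_pt B (fun b => Inf (fun u => exists a, A a /\ u = d a b)) b K); auto].
 - apply (Inf_ge A (fun a => d a b)); eauto.
 - intros b' Hb'. eapply Rle_trans; [apply (Inf_le_pt A (fun a => d a b') a0); auto|]. auto.
Qed.

Lemma haus_approx1 (A B : Z -> Prop) a r K eps : A a -> (exists b, B b) -> (forall a b, A a -> B b -> d a b <= K) ->
  hausdorff d A B <= r -> 0 < eps -> exists b, B b /\ d a b < r + eps.
Proof. intros Ha [b0 Hb0] HK Hh He.
 destruct (Inf_approx B (d a) eps) as [b [Hb Hlt]]; eauto.
 exists b; split; auto.
 assert (Inf (fun u => exists b, B b /\ u = d a b) <= r); [|lra].
 eapply Rle_trans; [|apply Hh]. unfold hausdorff. eapply Rle_trans; [|apply Rmax_l].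
 apply (Sup_ge_pt A (fun a => Inf (fun u => exists b, B b /\ u = d a b)) a K); auto.
 intros a' Ha'. eapply Rle_trans; [apply (Inf_le_pt B (d a') b0); auto|]. auto.
Qed.

Lemma haus_approx2 (A B : Z -> Prop) b r K eps : B b -> (exists a, A a) -> (forall a b, A a -> B b -> d a b <= K) ->
  hausdorff d A B <= r -> 0 < eps -> exists a, A a /\ d a b < r + eps.
Proof. intros Hb [a0 Ha0] HK Hh He.
 destruct (Inf_approx A (fun a => d a b) eps) as [a [Ha Hlt]]; eauto.
 exists a; split; auto.
 assert (Inf (fun u => exists a, A a /\ u = d a b) <= r); [|lra].
 eapply Rle_trans; [|apply Hh]. unfold hausdorff. eapply Rle_trans; [|apply Rmax_r].
 apply (Sup_ge_pt B (fun b => Inf (fun u => exists a, A a /\ u = d a b)) b K); auto.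
 intros b' Hb'. eapply Rle_trans; [apply (Inf_le_pt A (fun a => d a b') a0); auto|]. auto.
Qed.
End Haus.

Definition SL {X : Type} (d : X -> X -> R) (t : R) : Prop :=
  forall x y, (x = y -> d x y = 0) /\ (x <> y -> d x y = t).

Definition GHS (X : Type) (dX : X -> X -> R) (Y : Type) (dY : Y -> Y -> R) : R -> Prop :=
  fun r => exists (Z : Type) (dZ : Z -> Z -> R), is_metric dZ /\
         exists (f : X -> Z) (g : Y -> Z),
           isometric_embedding dX dZ f /\ isometric_embedding dY dZ g /\
           hausdorff dZ (image f) (image g) <= r.

Lemma dGH_GHS X dX Y dY : dGH X dX Y dY = Inf (GHS X dX Y dY).
Proof. reflexivity. Qed.

Lemma SL_cases {X} (d : X -> X -> R) t x y : SL d t -> (d x y = 0 /\ x = y) \/ (d x y = t /\ x <> y).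
Proof. intros H. destruct (Classical_Prop.classic (x = y)) as [e|n]; [left|right]; split; auto; apply (H x y); auto. Qed.

Definition dZc {X Y : Type} (dX : X -> X -> R) (dY : Y -> Y -> R) (σ : X -> Y) (t ρ : R) (a b : X + Y) : R :=
 match a, b with
 | inl x, inl x' => dX x x'
 | inr y, inr y' => dY y y'
 | inl x, inr y => ρ + Rmin (dY (σ x) y) t
 | inr y, inl x => ρ + Rmin (dY (σ x) y) t
 end.

Section Upper.
Context {X Y : Type} (dX : X -> X -> R) (dY : Y -> Y -> R) (σ : X -> Y) (t ρ D : R).
Hypothesis Ht : 0 < t.
Hypothesis HSL : SL dX t.
Hypothesis HY : is_metric dY.
Hypothesis HD : forall y y', dY y y' <= D.
Hypothesis Hρ : 0 < ρ.
Hypothesis H1 : D - t <= 2 * ρ.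
Hypothesis H2 : forall x x', x <> x' -> t - dY (σ x) (σ x') <= 2 * ρ.

Lemma Rmin_facts a b : Rmin a b <= a /\ Rmin a b <= b /\ (Rmin a b = a \/ Rmin a b = b).
Proof. unfold Rmin; destruct (Rle_dec a b); lra. Qed.

Lemma dZc_metric : is_metric (dZc dX dY σ t ρ).
Proof.
 destruct HY as [Ynn [Ydef [Ysym Ytri]]].
 assert (Hmin : forall x y, 0 <= Rmin (dY (σ x) y) t).
 { intros. unfold Rmin; destruct Rle_dec; auto; lra. }
 split; [|split; [|split]].
 - intros [x|y] [x'|y']; simpl; auto.
   + destruct (SL_cases dX t x x' HSL) as [[-> _]|[-> _]]; lra.
   + pose proof (Hmin x y'); lra.
   + pose proof (Hmin x' y); lra.
 - intros [x|y] [x'|y']; simpl; split; intro H.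
   + destruct (SL_cases dX t x x' HSL) as [[_ ->]|[He _]]; [reflexivity|lra].
   + inversion H; subst. apply HSL; reflexivity.
   + pose proof (Hmin x y'); lra.
   + discriminate.
   + pose proof (Hmin x' y); lra.
   + discriminate.
   + apply Ydef in H; subst; reflexivity.
   + inversion H; subst; apply Ydef; reflexivity.
 - intros [x|y] [x'|y']; simpl; auto.
   destruct (SL_cases dX t x x' HSL) as [[H -> ]|[H n]]; [reflexivity|].
   rewrite H. destruct (SL_cases dX t x' x HSL) as [[_ e]|[H' _]]; [congruence|auto].
 - intros [x|y] [x'|y'] [x''|y'']; simpl.
   + destruct (SL_cases dX t x x'' HSL) as [[-> _]|[-> n]].
     * destruct (SL_cases dX t x x' HSL) as [[-> _]|[-> _]]; destruct (SL_cases dX t x' x'' HSL) as [[-> _]|[-> _]]; lra.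
     * destruct (SL_cases dX t x x' HSL) as [[-> e]|[-> _]]; destruct (SL_cases dX t x' x'' HSL) as [[-> e']|[-> _]]; try lra.
       subst; congruence.
   + destruct (SL_cases dX t x x' HSL) as [[-> e]|[-> _]].
     * subst; lra.
     * destruct (Rmin_facts (dY (σ x) y'') t) as [a [b c]]. pose proof (Hmin x' y''). lra.
   + destruct (SL_cases dX t x x'' HSL) as [[-> e]|[-> n]].
     * pose proof (Hmin x y'); pose proof (Hmin x'' y'); lra.
     * specialize (H2 x x'' n). specialize (Ytri (σ x) y' (σ x'')). rewrite (Ysym y' (σ x'')) in Ytri.
       destruct (Rmin_facts (dY (σ x) y') t) as [a [b [c|c]]]; destruct (Rmin_facts (dY (σ x'') y') t) as [a' [b' [c'|c']]];
       pose proof (Hmin x y'); pose proof (Hmin x'' y'); lra.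
   + specialize (Ytri (σ x) y' y'').
     destruct (Rmin_facts (dY (σ x) y'') t) as [a [b [c|c]]]; destruct (Rmin_facts (dY (σ x) y') t) as [a' [b' [c'|c']]];
       pose proof (Ynn y' y''); lra.
   + destruct (SL_cases dX t x' x'' HSL) as [[-> e]|[-> _]].
     * subst; lra.
     * destruct (Rmin_facts (dY (σ x'') y) t) as [a [b c]]. pose proof (Hmin x' y). lra.
   + specialize (Ytri y (σ x') y''). rewrite (Ysym y (σ x')) in Ytri. specialize (HD y y'').
     destruct (Rmin_facts (dY (σ x') y) t) as [a [b [c|c]]]; destruct (Rmin_facts (dY (σ x') y'') t) as [a' [b' [c'|c']]];
       pose proof (Hmin x' y); pose proof (Hmin x' y''); lra.
   + pose proof (Ytri (σ x'') y' y). pose proof (Ynn y y'). rewrite (Ysym y' y) in *.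
     destruct (Rmin_facts (dY (σ x'') y) t) as [a [b [c|c]]]; destruct (Rmin_facts (dY (σ x'') y') t) as [a' [b' [c'|c']]];
       lra.
   + apply Ytri.
Qed.

Lemma GH_upper : (forall y, exists x, σ x = y) -> (exists y : Y, True) -> GHS X dX Y dY ρ.
Proof. intros Hs [y0 _].
 destruct HY as [Ynn [Ydef [Ysym Ytri]]].
 exists (X + Y)%type, (dZc dX dY σ t ρ). split; [apply dZc_metric|].
 exists inl, inr. split; [intros x x'; reflexivity|]. split; [intros y y'; reflexivity|].
 destruct (Hs y0) as [x0 _].
 apply haus_le.
 - apply dZc_metric.
 - exists (inl x0), x0; reflexivity.
 - exists (inr y0), y0; reflexivity.
 - intros a [x <-] eps He. exists (inr (σ x)). split; [exists (σ x); reflexivity|]. simpl.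
   rewrite (proj2 (Ydef _ _) eq_refl). unfold Rmin; destruct Rle_dec; lra.
 - intros b [y <-] eps He. destruct (Hs y) as [x <-]. exists (inl x). split; [exists x; reflexivity|]. simpl.
   rewrite (proj2 (Ydef _ _) eq_refl). unfold Rmin; destruct Rle_dec; lra.
Qed.
End Upper.

Lemma le_eps a b : (forall eps, 0 < eps -> a <= b + eps) -> a <= b.
Proof. intros H. apply Rnot_lt_le. intro Hl. specialize (H ((a-b)/2) ltac:(lra)). lra. Qed.

Lemma fchoice {A B : Type} (P : A -> B -> Prop) : (forall a, exists b, P a b) -> exists h : A -> B, forall a, P a (h a).
Proof. intros H. exists (fun a => proj1_sig (constructive_indefinite_description _ (H a))).
  intros a. exact (proj2_sig (constructive_indefinite_description _ (H a))). Qed.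

Section Lower.
Context {X Y : Type} (dX : X -> X -> R) (dY : Y -> Y -> R) (t D : R).
Hypothesis Ht : 0 < t.
Hypothesis HSL : SL dX t.
Hypothesis HY : is_metric dY.
Hypothesis HD : forall y y', dY y y' <= D.
Hypothesis HXn : exists x : X, True.
Hypothesis HYn : exists y : Y, True.

Lemma GH_corr r eps : GHS X dX Y dY r -> 0 < eps ->
  exists (Z : Type) (dZ : Z -> Z -> R) (f : X -> Z) (g : Y -> Z), is_metric dZ /\
   isometric_embedding dX dZ f /\ isometric_embedding dY dZ g /\
   (forall x, exists y, dZ (f x) (g y) < r + eps) /\ (forall y, exists x, dZ (f x) (g y) < r + eps).
Proof. intros [Z [dZ [HZ [f [g [Hf [Hg Hh]]]]]]] He.
 destruct HXn as [x0 _]. destruct HYn as [y0 _].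
 destruct HZ as [Znn [Zdef [Zsym Ztri]]].
 set (K := t + dZ (f x0) (g y0) + D).
 assert (HK : forall a b, image f a -> image g b -> dZ a b <= K).
 { intros a b [x <-] [y <-]. unfold K.
   pose proof (Ztri (f x) (f x0) (g y)). pose proof (Ztri (f x0) (g y0) (g y)).
   rewrite Hf in *. rewrite Hg in *. pose proof (HD y0 y).
   assert (dX x x0 <= t) by (destruct (SL_cases dX t x x0 HSL) as [[-> _]|[-> _]]; lra). lra. }
 exists Z, dZ, f, g. split; [repeat split; auto; apply Zdef; auto|]. split; [auto|]. split; [auto|]. split.
 - intros x. destruct (haus_approx1 dZ Znn (image f) (image g) (f x) r K eps) as [b [[y <-] Hy]]; auto.
   + exists x; reflexivity.
   + exists (g y0), y0; reflexivity.
   + exists y; auto.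
 - intros y. destruct (haus_approx2 dZ Znn (image f) (image g) (g y) r K eps) as [a [[x <-] Hx]]; auto.
   + exists y; reflexivity.
   + exists (f x0), x0; reflexivity.
   + exists x; auto.
Qed.

Lemma LB_0 r : GHS X dX Y dY r -> 0 <= r.
Proof. intros H. apply le_eps. intros eps He.
 destruct (GH_corr r eps H He) as [Z [dZ [f [g [[Znn _] [_ [_ [H1 _]]]]]]]].
 destruct HXn as [x0 _]. destruct (H1 x0) as [y Hy]. pose proof (Znn (f x0) (g y)). lra. Qed.

Lemma LB_D r : (exists y1 y2, dY y1 y2 = D) -> GHS X dX Y dY r -> D - t <= 2 * r.
Proof. intros [y1 [y2 HD12]] H. apply le_eps. intros eps He.
 destruct (GH_corr r (eps/2) H ltac:(lra)) as [Z [dZ [f [g [[Znn [_ [Zsym Ztri]]] [Hf [Hg [H1 H2]]]]]]]].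
 destruct (H2 y1) as [x1 Hx1]. destruct (H2 y2) as [x2 Hx2].
 pose proof (Ztri (g y1) (f x1) (g y2)). pose proof (Ztri (f x1) (f x2) (g y2)).
 rewrite Hf, Hg in *. rewrite (Zsym (g y1) (f x1)) in *.
 assert (dX x1 x2 <= t) by (destruct (SL_cases dX t x1 x2 HSL) as [[-> _]|[-> _]]; lra). lra. Qed.

Lemma LB_noninj r : (forall h : X -> Y, exists x x', x <> x' /\ h x = h x') -> GHS X dX Y dY r -> t <= 2 * r.
Proof. intros Hni H. apply le_eps. intros eps He.
 destruct (GH_corr r (eps/2) H ltac:(lra)) as [Z [dZ [f [g [[Znn [_ [Zsym Ztri]]] [Hf [Hg [H1 H2]]]]]]]].
 destruct (fchoice _ H1) as [h Hh].
 destruct (Hni h) as [x [x' [Hne Heq]]].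
 pose proof (Ztri (f x) (g (h x)) (f x')). rewrite Hf in *. rewrite (proj2 (HSL x x') Hne) in *.
 pose proof (Hh x). pose proof (Hh x'). rewrite Heq in *. rewrite (Zsym (g (h x')) (f x')) in *. lra. Qed.

Lemma LB_bij r y1 y2 : (forall h : X -> Y, (forall x x', h x = h x' -> x = x') -> forall y, exists x, h x = y) ->
  y1 <> y2 -> GHS X dX Y dY r -> t - dY y1 y2 <= 2 * r.
Proof. intros Hb Hne H. apply le_eps. intros eps He.
 destruct (GH_corr r (eps/2) H ltac:(lra)) as [Z [dZ [f [g [[Znn [_ [Zsym Ztri]]] [Hf [Hg [H1 H2]]]]]]]].
 destruct (fchoice _ H1) as [h Hh].
 destruct (Classical_Prop.classic (forall x x', h x = h x' -> x = x')) as [Hi|Hni].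
 - destruct (Hb h Hi y1) as [x1 <-]. destruct (Hb h Hi y2) as [x2 <-].
   assert (x1 <> x2) by (intro; subst; auto).
   pose proof (Ztri (f x1) (g (h x1)) (f x2)). pose proof (Ztri (g (h x1)) (g (h x2)) (f x2)).
   rewrite Hf, Hg in *. rewrite (proj2 (HSL x1 x2) H0) in *.
   pose proof (Hh x1). pose proof (Hh x2). rewrite (Zsym (g (h x2)) (f x2)) in *. lra.
 - apply Classical_Pred_Type.not_all_ex_not in Hni as [x Hni].
   apply Classical_Pred_Type.not_all_ex_not in Hni as [x' Hni].
   apply Classical_Prop.imply_to_and in Hni as [Heq Hne2].
   pose proof (Ztri (f x) (g (h x)) (f x')). rewrite Hf in *. rewrite (proj2 (HSL x x') Hne2) in *.
   pose proof (Hh x). pose proof (Hh x'). rewrite Heq in *. rewrite (Zsym (g (h x')) (f x')) in *.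
   destruct HY as [Ynn _]. pose proof (Ynn y1 y2). lra.
Qed.
End Lower.

Section Formula.
Context {X Y : Type} (dX : X -> X -> R) (dY : Y -> Y -> R) (t D : R).
Hypothesis Ht : 0 < t.
Hypothesis HSL : SL dX t.
Hypothesis HY : is_metric dY.
Hypothesis HD : forall y y', dY y y' <= D.
Hypothesis HDr : exists y1 y2, dY y1 y2 = D.
Hypothesis HYn : exists y : Y, True.

Theorem GH_strict : (exists σ : X -> Y, forall y, exists x, σ x = y) ->
  (forall h : X -> Y, exists x x', x <> x' /\ h x = h x') ->
  dGH X dX Y dY = Rmax (t/2) ((D-t)/2).
Proof. intros [σ Hs] Hni.
 assert (HXn : exists x : X, True) by (destruct HYn as [y _]; destruct (Hs y) as [x _]; eauto).
 rewrite dGH_GHS. apply Inf_eq.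
 - intros r Hr. apply Rmax_lub.
   + pose proof (LB_noninj dX dY t D Ht HSL HD HXn HYn r Hni Hr). lra.
   + pose proof (LB_D dX dY t D Ht HSL HD HXn HYn r HDr Hr). lra.
 - intros r Hr. pose proof (Rmax_l (t/2) ((D-t)/2)). pose proof (Rmax_r (t/2) ((D-t)/2)).
   destruct HY as [Ynn _].
   apply (GH_upper dX dY σ t r D); auto; try lra.
   intros x x' _. pose proof (Ynn (σ x) (σ x')). lra.
Qed.

Theorem GH_bij e : (exists σ : X -> Y, (forall y, exists x, σ x = y) /\ (forall x x', σ x = σ x' -> x = x')) ->
  (forall h : X -> Y, (forall x x', h x = h x' -> x = x') -> forall y, exists x, h x = y) ->
  (forall y y', y <> y' -> e <= dY y y') ->
  ((exists y1 y2, y1 <> y2 /\ dY y1 y2 = e) \/ t <= e) ->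
  dGH X dX Y dY = Rmax 0 (Rmax ((D-t)/2) ((t-e)/2)).
Proof. intros [σ [Hs Hi]] Hb He Her.
 assert (HXn : exists x : X, True) by (destruct HYn as [y _]; destruct (Hs y) as [x _]; eauto).
 rewrite dGH_GHS. apply Inf_eq.
 - intros r Hr. apply Rmax_lub; [apply (LB_0 dX dY t D Ht HSL HD HXn HYn r Hr)|]. apply Rmax_lub.
   + pose proof (LB_D dX dY t D Ht HSL HD HXn HYn r HDr Hr). lra.
   + destruct Her as [[y1 [y2 [Hne <-]]]|Hte].
     * pose proof (LB_bij dX dY t D Ht HSL HY HD HXn HYn r y1 y2 Hb Hne Hr). lra.
     * pose proof (LB_0 dX dY t D Ht HSL HD HXn HYn r Hr). lra.
 - intros r Hr. pose proof (Rmax_l 0 (Rmax ((D-t)/2) ((t-e)/2))). pose proof (Rmax_r 0 (Rmax ((D-t)/2) ((t-e)/2))).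
   pose proof (Rmax_l ((D-t)/2) ((t-e)/2)). pose proof (Rmax_r ((D-t)/2) ((t-e)/2)).
   apply (GH_upper dX dY σ t r D); auto; try lra.
   intros x x' Hne. assert (σ x <> σ x') by (intro Hq; apply Hne; auto).
   pose proof (He _ _ H3). lra.
Qed.
End Formula.

Definition card (T : Type) (k : nat) := exists l : list T, NoDup l /\ (forall x, In x l) /\ length l = k.

Lemma NoDup_map_inj {A B : Type} (f : A -> B) (l : list A) :
  (forall x y, In x l -> In y l -> f x = f y -> x = y) -> NoDup l -> NoDup (map f l).
Proof. induction l as [|a l IH]; intros Hi Hn; simpl; [constructor|].
 inversion Hn; subst. constructor.
 - intro Hin. apply in_map_iff in Hin as [b [Hb Hbl]]. assert (b = a) by (apply Hi; simpl; auto). subst; auto.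
 - apply IH; auto. intros; apply Hi; simpl; auto. Qed.

Lemma card_noninj {X Y : Type} (N k : nat) : card X N -> card Y k -> (k < N)%nat ->
  forall h : X -> Y, exists x x', x <> x' /\ h x = h x'.
Proof. intros [lx [Hnx [Hcx Hlx]]] [ly [Hny [Hcy Hly]]] Hlt h.
 apply Classical_Prop.NNPP. intro Hn.
 assert (Hi : forall x x', h x = h x' -> x = x').
 { intros x x' He. apply Classical_Prop.NNPP. intro Hne. apply Hn. exists x, x'; auto. }
 assert (Hnd : NoDup (map h lx)) by (apply NoDup_map_inj; auto).
 assert (Hinc : incl (map h lx) ly) by (intros y _; auto).
 pose proof (NoDup_incl_length Hnd Hinc). rewrite length_map in H. lia. Qed.

Lemma card_injsurj {X Y : Type} (N : nat) : card X N -> card Y N ->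
  forall h : X -> Y, (forall x x', h x = h x' -> x = x') -> forall y, exists x, h x = y.
Proof. intros [lx [Hnx [Hcx Hlx]]] [ly [Hny [Hcy Hly]]] h Hi y.
 assert (Hnd : NoDup (map h lx)) by (apply NoDup_map_inj; auto).
 assert (Hinc : incl (map h lx) ly) by (intros z _; auto).
 assert (Hinc2 := @NoDup_length_incl _ (map h lx) ly Hnd ltac:(rewrite length_map; lia) Hinc).
 specialize (Hinc2 y (Hcy y)). apply in_map_iff in Hinc2 as [x [Hx _]]. eauto. Qed.

Lemma card_surj {X Y : Type} (N k : nat) : card X N -> card Y k -> (1 <= k)%nat -> (k <= N)%nat ->
  exists σ : X -> Y, (forall y, exists x, σ x = y) /\ ((k = N) -> forall x x', σ x = σ x' -> x = x').
Proof. intros [lx [Hnx [Hcx Hlx]]] [ly [Hny [Hcy Hly]]] H1 H2.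
 destruct ly as [|y0 ly']; [simpl in Hly; lia|].
 destruct lx as [|x0 lx']; [simpl in Hlx; lia|].
 set (ly := y0 :: ly') in *. set (lx := x0 :: lx') in *.
 assert (Hidx : forall x, exists j, (j < length lx)%nat /\ nth j lx x0 = x).
 { intros x. apply In_nth. auto. }
 destruct (fchoice _ Hidx) as [idx Hidx'].
 exists (fun x => nth (idx x) ly y0). split.
 - intros y. destruct (In_nth ly y y0 (Hcy y)) as [j [Hj Hjy]].
   exists (nth j lx x0). destruct (Hidx' (nth j lx x0)) as [Hj1 Hj2].
   assert (idx (nth j lx x0) = j).
   { apply (proj1 (NoDup_nth lx x0) Hnx); auto. lia. }
   rewrite H. exact Hjy.
 - intros Hk x x' He. destruct (Hidx' x) as [A1 A2]. destruct (Hidx' x') as [B1 B2].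
   assert (idx x = idx x') by (apply (proj1 (NoDup_nth ly y0) Hny); auto; lia).
   rewrite <- A2, <- B2, H. reflexivity.
Qed.

Lemma list_max {A : Type} (g : A -> R) (L : list A) : L <> nil -> exists a, In a L /\ forall b, In b L -> g b <= g a.
Proof. induction L as [|a L IH]; intros H; [congruence|].
 destruct L as [|a' L'].
 - exists a. split; [simpl; auto|]. intros b [<-|[]]; lra.
 - destruct (IH ltac:(discriminate)) as [c [Hc Hcm]].
   destruct (Rle_dec (g a) (g c)).
   + exists c. split; [right; auto|]. intros b [<-|Hb]; auto.
   + exists a. split; [left; auto|]. intros b [<-|Hb]; [lra|]. specialize (Hcm b Hb). lra.
Qed.

Lemma list_min {A : Type} (g : A -> R) (L : list A) : L <> nil -> exists a, In a L /\ forall b, In b L -> g a <= g b.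
Proof. intros H. destruct (list_max (fun a => - g a) L H) as [a [Ha Hm]]. exists a; split; auto.
 intros b Hb; specialize (Hm b Hb); lra. Qed.

Section Fin.
Context {X : Type} (d : X -> X -> R) (Hd : is_metric d) (l : list X) (Hc : forall x, In x l).

Lemma fin_diam : l <> nil -> exists a b, forall x y, d x y <= d a b.
Proof. intros Hn. destruct (list_max (fun p => d (fst p) (snd p)) (list_prod l l)) as [[a b] [_ Hm]].
 - destruct l as [|x l']; [congruence|]. simpl. discriminate.
 - exists a, b. intros x y. apply (Hm (x, y)). apply in_prod; auto. Qed.

Lemma fin_emin : NoDup l -> (2 <= length l)%nat -> exists a b, a <> b /\ forall x y, x <> y -> d a b <= d x y.
Proof. intros Hnd Hl.
 set (L := filter (fun p : X * X => if excluded_middle_informative (fst p = snd p) then false else true) (list_prod l l)).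
 destruct l as [|x0 [|x1 l']]; simpl in Hl; try lia.
 assert (Hne : x0 <> x1) by (inversion Hnd; subst; intro; subst; apply H1; simpl; auto).
 destruct (list_min (fun p => d (fst p) (snd p)) L) as [[a b] [Hab Hm]].
 - assert (In (x0, x1) L). { unfold L. apply filter_In. split; [apply in_prod; simpl; auto|]. simpl.
     destruct excluded_middle_informative; congruence. }
   intro He; rewrite He in H; inversion H.
 - exists a, b. unfold L in Hab. apply filter_In in Hab as [_ Hab]. simpl in Hab.
   split; [destruct excluded_middle_informative; congruence|].
   intros x y Hxy. apply (Hm (x, y)). unfold L. apply filter_In. split; [apply in_prod; auto|]. simpl.
   destruct (excluded_middle_informative (x = y)); [congruence|reflexivity].
Qed.

Lemma pos_sep : forall (l0 : list X) x, exists eps, 0 < eps /\ forall a, In a l0 -> a <> x -> eps <= d x a.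
Proof. destruct Hd as [Dnn [Ddef [Dsym Dtri]]].
 induction l0 as [|a l0 IH]; intros x.
 - exists 1; split; [lra|]. intros a [].
 - destruct (IH x) as [e [He Hm]].
   destruct (excluded_middle_informative (a = x)) as [Hax|Hax].
   + exists e; split; auto. intros b [<-|Hb] Hbx; [congruence|auto].
   + assert (0 < d x a). { pose proof (Dnn x a). destruct (Rle_lt_or_eq_dec _ _ H); auto.
       symmetry in e0. apply Ddef in e0. congruence. }
     exists (Rmin e (d x a)). split; [unfold Rmin; destruct Rle_dec; lra|].
     intros b [<-|Hb] Hbx; unfold Rmin; destruct Rle_dec; try lra; specialize (Hm b Hb Hbx); lra.
Qed.

Lemma all_closed (A : X -> Prop) : closed d A.
Proof. intros x H. apply Classical_Prop.NNPP. intro Hn.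
 destruct (pos_sep l x) as [e [He Hm]]. destruct (H e He) as [a [Ha Hda]].
 assert (a <> x) by (intro; subst; auto). specialize (Hm a (Hc a) H0). lra. Qed.
End Fin.

Lemma hyp_ext {X : Type} (d : X -> X -> R) (A B : hyp X d) : (forall x, proj1_sig A x <-> proj1_sig B x) -> A = B.
Proof. destruct A as [A pA], B as [B pB]; simpl. intro H.
 assert (A = B) by (apply functional_extensionality; intro; apply propositional_extensionality; auto).
 subst. f_equal. apply proof_irrelevance. Qed.

Section HypFacts.
Context {X : Type} (d : X -> X -> R) (Hd : is_metric d) (Dm : R) (Hbd : forall x y, d x y <= Dm).

Let Dnn : forall x y, 0 <= d x y. Proof. apply Hd. Qed.
Let Ddef : forall x y, d x y = 0 <-> x = y. Proof. apply Hd. Qed.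
Let Dsym : forall x y, d x y = d y x. Proof. apply Hd. Qed.
Let Dtri : forall x y z, d x z <= d x y + d y z. Proof. apply Hd. Qed.

Let ne (A : hyp X d) : exists x, proj1_sig A x. Proof. apply (proj2_sig A). Qed.
Let cl (A : hyp X d) : closed d (proj1_sig A). Proof. apply (proj2_sig A). Qed.

Lemma hd_le (A B : hyp X d) : hyp_dist d A B <= Dm.
Proof. unfold hyp_dist. apply haus_le; auto.
 - intros a Ha eps He. destruct (ne B) as [b Hb]. exists b; split; auto. specialize (Hbd a b); lra.
 - intros b Hb eps He. destruct (ne A) as [a Ha]. exists a; split; auto. specialize (Hbd a b); lra. Qed.

Lemma hd_nn (A B : hyp X d) : 0 <= hyp_dist d A B.
Proof. unfold hyp_dist. destruct (ne A) as [a Ha]. apply (haus_ge1 d Dnn _ _ a 0 Dm); auto. Qed.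

Lemma hd_approx1 (A B : hyp X d) a r eps : hyp_dist d A B <= r -> proj1_sig A a -> 0 < eps ->
  exists b, proj1_sig B b /\ d a b < r + eps.
Proof. intros. apply (haus_approx1 d Dnn (proj1_sig A) (proj1_sig B) a r Dm eps); auto. Qed.

Lemma hd_approx2 (A B : hyp X d) b r eps : hyp_dist d A B <= r -> proj1_sig B b -> 0 < eps ->
  exists a, proj1_sig A a /\ d a b < r + eps.
Proof. intros. apply (haus_approx2 d Dnn (proj1_sig A) (proj1_sig B) b r Dm eps); auto. Qed.

Lemma hd_sym_le (A B : hyp X d) : hyp_dist d A B <= hyp_dist d B A.
Proof. unfold hyp_dist at 1. apply haus_le; auto.
 - intros a Ha eps He. destruct (hd_approx2 B A a (hyp_dist d B A) eps (Rle_refl _) Ha He) as [b [Hb Hl]].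
   exists b; split; auto. rewrite Dsym; auto.
 - intros b Hb eps He. destruct (hd_approx1 B A b (hyp_dist d B A) eps (Rle_refl _) Hb He) as [a [Ha Hl]].
   exists a; split; auto. rewrite Dsym; auto. Qed.

Lemma hd_self (A : hyp X d) : hyp_dist d A A = 0.
Proof. apply Rle_antisym; [|apply hd_nn]. unfold hyp_dist. apply haus_le; auto.
 - intros a Ha eps He. exists a; split; auto. rewrite (proj2 (Ddef a a) eq_refl). lra.
 - intros a Ha eps He. exists a; split; auto. rewrite (proj2 (Ddef a a) eq_refl). lra. Qed.

Lemma hd_metric : is_metric (hyp_dist d).
Proof. split; [|split; [|split]].
 - apply hd_nn.
 - intros A B; split; [intro H|intros ->; apply hd_self].
   apply hyp_ext. intros x; split; intro Hx.
   + apply (cl B). intros eps He. destruct (hd_approx1 A B x 0 eps (Req_le _ _ H) Hx He) as [b [Hb Hl]].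
     exists b; split; auto. lra.
   + apply (cl A). intros eps He. destruct (hd_approx2 A B x 0 eps (Req_le _ _ H) Hx He) as [a [Ha Hl]].
     exists a; split; auto. rewrite Dsym. lra.
 - intros; apply Rle_antisym; apply hd_sym_le.
 - intros A B C. unfold hyp_dist at 1. apply haus_le; auto.
   + intros a Ha eps He. destruct (hd_approx1 A B a (hyp_dist d A B) (eps/2) (Rle_refl _) Ha ltac:(lra)) as [b [Hb Hl]].
     destruct (hd_approx1 B C b (hyp_dist d B C) (eps/2) (Rle_refl _) Hb ltac:(lra)) as [c [Hc Hl']].
     exists c; split; auto. pose proof (Dtri a b c). lra.
   + intros c Hc eps He. destruct (hd_approx2 B C c (hyp_dist d B C) (eps/2) (Rle_refl _) Hc ltac:(lra)) as [b [Hb Hl]].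
     destruct (hd_approx2 A B b (hyp_dist d A B) (eps/2) (Rle_refl _) Hb ltac:(lra)) as [a [Ha Hl']].
     exists a; split; auto. pose proof (Dtri a b c). lra.
Qed.

Lemma hyp_neq (A B : hyp X d) : A <> B -> exists x, (proj1_sig A x /\ ~ proj1_sig B x) \/ (proj1_sig B x /\ ~ proj1_sig A x).
Proof. intros Hne. apply Classical_Prop.NNPP. intro Hn. apply Hne. apply hyp_ext. intros x.
 split; intro H; apply Classical_Prop.NNPP; intro H'; apply Hn; exists x; auto. Qed.

Lemma hd_e (e : R) (He : forall a b, a <> b -> e <= d a b) (A B : hyp X d) : A <> B -> e <= hyp_dist d A B.
Proof. intros Hne. destruct (hyp_neq A B Hne) as [x [[Ha Hb]|[Hb Ha]]]; unfold hyp_dist.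
 - apply (haus_ge1 d Dnn _ _ x e Dm); auto. intros b Hb'. apply He. intro; subst; auto.
 - apply (haus_ge2 d Dnn _ _ x e Dm); auto. intros a Ha'. apply He. intro; subst; auto. Qed.

Lemma hd_SL t : 0 < t -> SL d t -> SL (hyp_dist d) t.
Proof. intros Ht HS A B. split; [intros ->; apply hd_self|]. intros Hne. apply Rle_antisym.
 - unfold hyp_dist. apply haus_le; auto.
   + intros a Ha eps He. destruct (ne B) as [b Hb]. exists b; split; auto.
     destruct (SL_cases d t a b HS) as [[-> _]|[-> _]]; lra.
   + intros b Hb eps He. destruct (ne A) as [a Ha]. exists a; split; auto.
     destruct (SL_cases d t a b HS) as [[-> _]|[-> _]]; lra.
 - apply hd_e; auto. intros a b Hab. rewrite (proj2 (HS a b) Hab). lra.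
Qed.

End HypFacts.

Lemma sing_closed {X : Type} (d : X -> X -> R) (Hd : is_metric d) (a : X) : closed d (fun x => x = a).
Proof. intros x H. destruct Hd as [Dnn [Ddef _]]. apply Ddef. apply Rle_antisym; [|apply Dnn].
 apply Rnot_lt_le. intro Hl. destruct (H (d x a) Hl) as [a' [-> Hl']]. lra. Qed.

Definition sing {X : Type} (d : X -> X -> R) (Hd : is_metric d) (a : X) : hyp X d :=
  exist _ (fun x => x = a) (conj (ex_intro _ a eq_refl) (sing_closed d Hd a)).

Lemma hd_sing {X : Type} (d : X -> X -> R) (Hd : is_metric d) Dm (Hbd : forall x y, d x y <= Dm) (a b : X) :
  hyp_dist d (sing d Hd a) (sing d Hd b) = d a b.
Proof. assert (Dnn : forall x y, 0 <= d x y) by apply Hd. unfold hyp_dist; simpl. apply Rle_antisym.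
 - apply haus_le; auto; try (eexists; reflexivity).
   + intros a' -> eps He. exists b; split; auto; lra.
   + intros b' -> eps He. exists a; split; auto; lra.
 - apply (haus_ge1 d Dnn _ _ a (d a b) Dm); auto. eexists; reflexivity. intros b' ->; lra. Qed.

Fixpoint nesubs {X : Type} (l : list X) : list (list X) :=
  match l with
  | nil => nil
  | x :: l => nesubs l ++ (x :: nil) :: map (cons x) (nesubs l)
  end.

Lemma nesubs_len {X : Type} (l : list X) : (length (nesubs l) + 1 = 2 ^ length l)%nat.
Proof. induction l as [|x l IH]; simpl; auto. rewrite length_app. simpl. rewrite length_map. lia. Qed.

Lemma nesubs_prop {X : Type} (l : list X) s : In s (nesubs l) -> s <> nil /\ incl s l.
Proof. revert s. induction l as [|x l IH]; intros s Hs; simpl in Hs; [contradiction|].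
 apply in_app_or in Hs as [Hs|[<-|Hs]].
 - destruct (IH s Hs) as [H1 H2]. split; auto. intros y Hy; right; auto.
 - split; [discriminate|]. intros y [<-|[]]; left; auto.
 - apply in_map_iff in Hs as [s' [<- Hs']]. destruct (IH s' Hs') as [H1 H2]. split; [discriminate|].
   intros y [<-|Hy]; [left; auto|right; auto]. Qed.

Lemma nesubs_complete {X : Type} (l : list X) (p : X -> Prop) : (exists x, In x l /\ p x) ->
  exists s, In s (nesubs l) /\ forall y, In y s <-> (In y l /\ p y).
Proof. induction l as [|x l IH]; intros [z [Hz Hp]]; [destruct Hz|]. simpl.
 destruct (Classical_Prop.classic (p x)) as [Hx|Hx].
 - destruct (Classical_Prop.classic (exists y, In y l /\ p y)) as [Hl|Hl].
   + destruct (IH Hl) as [s [Hs Hsy]]. exists (x :: s). split; [apply in_or_app; right; right; apply in_map; auto|].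
     intros y; split.
     * intros [<-|Hy]; [split; auto; left; auto|]. apply Hsy in Hy as [? ?]. split; auto; right; auto.
     * intros [[<-|Hy] Hpy]; [left; auto|right; apply Hsy; auto].
   + exists (x :: nil). split; [apply in_or_app; right; left; auto|]. intros y; split.
     * intros [<-|[]]; split; auto; left; auto.
     * intros [[<-|Hy] Hpy]; [left; auto|exfalso; apply Hl; eauto].
 - destruct IH as [s [Hs Hsy]].
   + exists z. destruct Hz as [<-|Hz]; [contradiction|auto].
   + exists s. split; [apply in_or_app; left; auto|]. intros y; split.
     * intros Hy. apply Hsy in Hy as [? ?]. split; auto; right; auto.
     * intros [[<-|Hy] Hpy]; [contradiction|apply Hsy; auto].
Qed.

Definition memb {X : Type} (s : list X) : X -> Prop := fun y => In y s.

Lemma NoDup_map_transfer {A B C : Type} (f : A -> B) (g : A -> C) (L : list A) :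
  NoDup (map f L) -> (forall a b, In a L -> In b L -> g a = g b -> f a = f b) -> NoDup (map g L).
Proof. induction L as [|a L IH]; simpl; intros Hn Hfg; [constructor|]. inversion Hn; subst. constructor.
 - intro Hin. apply in_map_iff in Hin as [b [Hb HbL]]. apply H1. rewrite (Hfg a b); auto. apply in_map; auto.
 - apply IH; auto. Qed.

Lemma memb_eq {X : Type} (s s' : list X) : memb s = memb s' -> forall y, In y s <-> In y s'.
Proof. intros H y. change (memb s y <-> memb s' y). rewrite H. tauto. Qed.

Lemma nesubs_nodup {X : Type} (l : list X) : NoDup l -> NoDup (map memb (nesubs l)).
Proof. induction l as [|x l IH]; intros Hn; simpl; [constructor|]. inversion Hn; subst.
 rewrite map_app. simpl. apply NoDup_app.
 - apply IH; auto.
 - constructor.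
   + intro Hin. rewrite map_map in Hin. apply in_map_iff in Hin as [s [Hs Hsl]].
     destruct (nesubs_prop l s Hsl) as [Hne Hinc]. destruct s as [|y s]; [congruence|].
     pose proof (memb_eq _ _ Hs y) as E. simpl in E. destruct (proj1 E (or_intror (or_introl eq_refl))) as [<-|[]].
     apply H1. apply Hinc. left; auto.
   + rewrite map_map. apply (NoDup_map_transfer memb); [apply IH; auto|].
     intros a b Ha Hb Heq. apply functional_extensionality. intro y. apply propositional_extensionality.
     pose proof (memb_eq _ _ Heq y) as E. simpl in E. unfold memb.
     destruct (nesubs_prop l a Ha) as [_ Ia]. destruct (nesubs_prop l b Hb) as [_ Ib].
     split; intro Hy.
     * destruct (proj1 E (or_intror Hy)) as [<-|?]; auto. exfalso; apply H1; apply Ia; auto.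
     * destruct (proj2 E (or_intror Hy)) as [<-|?]; auto. exfalso; apply H1; apply Ib; auto.
 - intros p Hp1 Hp2. apply in_map_iff in Hp1 as [s [<- Hs]]. destruct (nesubs_prop l s Hs) as [_ Is].
   assert (memb s x).
   { destruct Hp2 as [Hp2|Hp2].
     - rewrite <- Hp2. left; auto.
     - rewrite map_map in Hp2. apply in_map_iff in Hp2 as [s' [Hs' _]]. rewrite <- Hs'. left; auto. }
   apply H1. apply Is. exact H.
Qed.

Section CardHyp.
Context {X : Type} (d : X -> X -> R) (Hd : is_metric d) (l : list X) (Hc : forall x, In x l) (Hnd : NoDup l) (x0 : X).

Definition nz (s : list X) : list X := match s with nil => x0 :: nil | _ => s end.

Lemma nz_ne s : exists y, memb (nz s) y.
Proof. destruct s as [|y s]; [exists x0|exists y]; left; auto. Qed.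

Definition mkH (s : list X) : hyp X d := exist _ (memb (nz s)) (conj (nz_ne s) (all_closed d Hd l Hc _)).

Lemma card_hyp : card (hyp X d) (2 ^ length l - 1).
Proof. exists (map mkH (nesubs l)). split; [|split].
 - apply (NoDup_map_transfer memb); [apply nesubs_nodup; auto|].
   intros a b Ha Hb Heq. destruct (nesubs_prop l a Ha) as [Na _]. destruct (nesubs_prop l b Hb) as [Nb _].
   apply (f_equal (@proj1_sig _ _)) in Heq. simpl in Heq.
   destruct a; [congruence|]. destruct b; [congruence|]. exact Heq.
 - intros A. destruct (nesubs_complete l (proj1_sig A)) as [s [Hs Hsy]].
   + destruct (proj2_sig A) as [[x Hx] _]. exists x; auto.
   + apply in_map_iff. exists s. split; auto. apply hyp_ext. intros y. simpl.
     destruct (nesubs_prop l s Hs) as [Ns _]. destruct s as [|z s]; [congruence|]. unfold nz, memb.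
     rewrite Hsy. split; [intros [_ H]; auto|intros H; auto].
 - rewrite length_map. pose proof (nesubs_len l). lia.
Qed.
End CardHyp.

Lemma simplex_eq n (i j : simplex n) : proj1_sig i = proj1_sig j -> i = j.
Proof. destruct i as [i pi], j as [j pj]; simpl; intros ->. f_equal. apply proof_irrelevance. Qed.

Lemma simplex_SL n t : SL (simplex_dist n t) t.
Proof. intros i j. unfold simplex_dist. split; intros H.
 - subst. destruct Nat.eq_dec; congruence.
 - destruct Nat.eq_dec as [e|]; auto. exfalso; apply H; apply simplex_eq; auto. Qed.

Lemma SL_metric {X : Type} (d : X -> X -> R) t : 0 < t -> SL d t -> is_metric d.
Proof. intros Ht H. split; [|split; [|split]].
 - intros x y. destruct (SL_cases d t x y H) as [[-> _]|[-> _]]; lra.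
 - intros x y. split; [intro E|intros ->; apply H; auto].
   destruct (SL_cases d t x y H) as [[_ ?]|[? _]]; auto. lra.
 - intros x y. destruct (SL_cases d t x y H) as [[-> e]|[-> n]].
   + subst; symmetry; apply H; auto.
   + symmetry; apply H; auto.
 - intros x y z. destruct (SL_cases d t x z H) as [[-> _]|[-> n]].
   + destruct (SL_cases d t x y H) as [[-> _]|[-> _]]; destruct (SL_cases d t y z H) as [[-> _]|[-> _]]; lra.
   + destruct (SL_cases d t x y H) as [[-> e]|[-> _]]; destruct (SL_cases d t y z H) as [[-> e']|[-> _]]; try lra.
     subst; congruence.
Qed.

Lemma minlt n i : (1 <= n)%nat -> (Nat.min i (n-1) < n)%nat.
Proof. lia. Qed.

Lemma simplex_card n : (1 <= n)%nat -> card (simplex n) n.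
Proof. intros Hn.
 set (mkS := fun i => exist (fun i => (i < n)%nat) (Nat.min i (n-1)) (minlt n i Hn) : simplex n).
 exists (map mkS (seq 0 n)). split; [|split].
 - apply NoDup_map_inj; [|apply seq_NoDup]. intros i j Hi Hj E.
   apply in_seq in Hi; apply in_seq in Hj. apply (f_equal (@proj1_sig _ _)) in E. simpl in E. lia.
 - intros [k pk]. apply in_map_iff. exists k. split; [apply simplex_eq; simpl; lia|apply in_seq; lia].
 - rewrite length_map, length_seq. auto.
Qed.

Lemma card1_eq {T : Type} : card T 1 -> forall y y' : T, y = y'.
Proof. intros [l [_ [Hc Hl]]] y y'. destruct l as [|a [|b l]]; simpl in Hl; try lia.
 destruct (Hc y) as [<-|[]]; destruct (Hc y') as [<-|[]]; auto. Qed.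

Lemma sing_inj {X : Type} (d : X -> X -> R) Hd (a b : X) : sing d Hd a = sing d Hd b -> a = b.
Proof. intros E. apply (f_equal (@proj1_sig _ _)) in E. simpl in E.
 assert (H := equal_f E a). simpl in H. rewrite <- H. auto. Qed.

Theorem mainTheorem12 (M : Type) (dM : M -> M -> R) (m n : nat) (t : R) :
  is_metric dM ->
  (exists l : list M, NoDup l /\ (forall x, In x l) /\ length l = m) ->
  (1 <= m)%nat ->
  (m <= n)%nat ->
  0 < t ->
  dGH (simplex n) (simplex_dist n t) M dM =
  dGH (hyp (simplex n) (simplex_dist n t)) (hyp_dist (simplex_dist n t))
      (hyp M dM) (hyp_dist dM).
Proof.
 intros HdM Hl Hm Hmn Ht.
 assert (cardM : card M m) by exact Hl.
 destruct Hl as [l [Hnd [Hc Hlen]]].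
 assert (Hlne : l <> nil) by (intro; subst; simpl in Hm; lia).
 destruct (fin_diam dM l Hc Hlne) as [a [b HDab]].
 set (D := dM a b) in *.
 assert (HSn := simplex_SL n t).
 assert (HmS := SL_metric _ t Ht HSn).
 assert (HbS : forall i j, simplex_dist n t i j <= t).
 { intros i j. destruct (SL_cases _ t i j HSn) as [[-> _]|[-> _]]; lra. }
 assert (cardS : card (simplex n) n) by (apply simplex_card; lia).
 destruct cardS as [ls [Hnds [Hcs Hlens]]].
 assert (Hlsne : ls <> nil) by (intro; subst; simpl in Hlens; lia).
 destruct ls as [|s0 ls']; [congruence|].
 assert (cardHS : card (hyp (simplex n) (simplex_dist n t)) (2 ^ n - 1)).
 { pose proof (card_hyp _ HmS _ Hcs Hnds s0) as H. rewrite Hlens in H. exact H. }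
 assert (cardHM : card (hyp M dM) (2 ^ m - 1)).
 { pose proof (card_hyp _ HdM _ Hc Hnd a) as H. rewrite Hlen in H. exact H. }
 assert (HSLH : SL (hyp_dist (simplex_dist n t)) t) by (apply (hd_SL _ HmS t HbS t Ht HSn)).
 assert (HmH : is_metric (hyp_dist dM)) by (apply (hd_metric dM HdM D HDab)).
 assert (HDH : forall A B, hyp_dist dM A B <= D) by (apply (hd_le dM HdM D HDab)).
 assert (HDHr : exists A B, hyp_dist dM A B = D).
 { exists (sing dM HdM a), (sing dM HdM b). apply (hd_sing dM HdM D HDab). }
 assert (HDr : exists y1 y2, dM y1 y2 = D) by (exists a, b; reflexivity).
 assert (HYn : exists y : M, True) by (exists a; auto).
 assert (HYnH : exists y : hyp M dM, True) by (exists (sing dM HdM a); auto).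
 assert (P2m : (2 <= 2 ^ m)%nat) by (change 2%nat with (2^1)%nat at 1; apply Nat.pow_le_mono_r; lia).
 assert (P2n : (2 ^ m <= 2 ^ n)%nat) by (apply Nat.pow_le_mono_r; lia).
 destruct (Nat.lt_ge_cases m n) as [Hlt|Hge].
 - assert (P2lt : (2 ^ m < 2 ^ n)%nat) by (apply Nat.pow_lt_mono_r; lia).
   destruct (card_surj n m (ex_intro _ _ (conj Hnds (conj Hcs Hlens))) cardM Hm Hmn) as [σ [Hs _]].
   destruct (card_surj (2^n-1) (2^m-1) cardHS cardHM ltac:(lia) ltac:(lia)) as [σH [HsH _]].
   rewrite (GH_strict (simplex_dist n t) dM t D Ht HSn HdM HDab HDr HYn).
   2: exists σ; exact Hs.
   2: apply (card_noninj n m (ex_intro _ _ (conj Hnds (conj Hcs Hlens))) cardM Hlt).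
   rewrite (GH_strict (hyp_dist (simplex_dist n t)) (hyp_dist dM) t D Ht HSLH HmH HDH HDHr HYnH).
   2: exists σH; exact HsH.
   2: apply (card_noninj (2^n-1) (2^m-1) cardHS cardHM); lia.
   reflexivity.
 - assert (m = n) by lia. subst n.
   assert (cS : card (simplex m) m) by (exists (s0 :: ls'); auto).
   destruct (card_surj m m cS cardM Hm (le_n _)) as [σ [Hs Hi]].
   destruct (card_surj (2^m-1) (2^m-1) cardHS cardHM ltac:(lia) (le_n _)) as [σH [HsH HiH]].
   destruct (Compare_dec.le_lt_dec 2 m) as [H2|H1].
   + destruct (fin_emin dM l Hc Hnd ltac:(lia)) as [ea [eb [Hne Hmin]]].
     rewrite (GH_bij (simplex_dist m t) dM t D Ht HSn HdM HDab HDr HYn (dM ea eb)).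
     2: exists σ; split; auto.
     2: apply (card_injsurj m cS cardM).
     2: auto.
     2: left; exists ea, eb; auto.
     rewrite (GH_bij (hyp_dist (simplex_dist m t)) (hyp_dist dM) t D Ht HSLH HmH HDH HDHr HYnH (dM ea eb)).
     2: exists σH; split; auto.
     2: apply (card_injsurj (2^m-1) cardHS cardHM).
     2: intros A B HAB; apply (hd_e dM HdM D HDab); auto.
     2: left; exists (sing dM HdM ea), (sing dM HdM eb); split;
          [intro E; apply Hne; apply (sing_inj dM HdM); auto | apply (hd_sing dM HdM D HDab)].
     reflexivity.
   + assert (H1' : m = 1%nat) by lia.
     assert (c1 : card M 1) by (rewrite <- H1'; exact cardM).
     assert (c1H : card (hyp M dM) 1) by (replace 1%nat with (2^m - 1)%nat by (rewrite H1'; reflexivity); exact cardHM).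
     rewrite (GH_bij (simplex_dist m t) dM t D Ht HSn HdM HDab HDr HYn t).
     2: exists σ; split; auto.
     2: apply (card_injsurj m cS cardM).
     2: intros y y' Hne; exfalso; apply Hne; apply (card1_eq c1).
     2: right; lra.
     rewrite (GH_bij (hyp_dist (simplex_dist m t)) (hyp_dist dM) t D Ht HSLH HmH HDH HDHr HYnH t).
     2: exists σH; split; auto.
     2: apply (card_injsurj (2^m-1) cardHS cardHM).
     2: intros y y' Hne; exfalso; apply Hne; apply (card1_eq c1H).
     2: right; lra.
     reflexivity.
Qed.
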